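(* Let $G$ be a finitely generated group and $\phi\in\mathrm{Aut}(G)$. Then: (i) if $GCP_{Rat}(G\rtimes_\phi\mathbb{Z})$ is decidable, then $GBrCP_{(Rat,\phi)}(G)$ and $GTCP_{(Rat,\phi)}(G)$ are decidable; (ii) if $GCP_{Rat}(G\rtimes\mathbb{Z})$ is decidable, then $GBrCP_{Rat}(G)$ and $GTCP_{Rat}(G)$ are decidable; (iii) if $GCP_{Alg}(G\rtimes_\phi\mathbb{Z})$ is decidable, then $GBrCP_{(Alg,\phi)}(G)$ and $GTCP_{(Alg,\phi)}(G)$ are decidable; (iv) if $GCP_{Alg}(G\rtimes\mathbb{Z})$ is decidable, then $GBrCP_{Alg}(G)$ and $GTCP_{Alg}(G)$ are decidable.
   Context: $G\rtimes_\psi\mathbb{Z}$ is generated by $G$ and $t$ with $t^{-1}at=\psi(a)$. For a finitely generated group $X$ with finite generating set $A$ and canonical surjection $\pi:\tilde A^*\to X$ from the free monoid on $A\cup A^{-1}$, a subset $K\subseteq X$ is rational ($Rat$) if $K=L\pi$ for a rational language $L$, and algebraic ($Alg$) if $K=L\pi$ for a context-free language $L$ (given by automaton/grammar). For $\mathcal C\in\{Rat,Alg\}$: $GCP_{\mathcal C}(X)$: given $K\in\mathcal C(X)$ and $x\in X$, decide whether some conjugate of $x$ lies in $K$; $GCP_{\mathcal C}(G\rtimes\mathbb{Z})$ is the uniform version with the defining automorphism also part of the input. $GBrCP_{\mathcal C}(G)$: given $K\in\mathcal C(G)$, $\psi\in\mathrm{Aut}(G)$, $x\in G$, decide whether some $\psi^k(x)$,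 $k\in\mathbb{Z}$, is conjugate to an element of $K$. $GTCP_{\mathcal C}(G)$: given $K$, $\psi$, $x$, decide whether there is $z\in G$ with $\psi(z)^{-1}xz\in K$. The subscript $(\mathcal C,\phi)$ means the automorphism is fixed to be $\phi$. *)

(* Defs.v *)
From mathcomp Require Import all_boot all_algebra.
Set Implicit Arguments. Unset Strict Implicit. Unset Printing Implicit Defensive.
Import GRing.Theory.

(* Decidability is expressed through this explicit program syntax,    *)
(* NOT through Rocq functions (which, with the classical axioms that  *)
(* are allowed, would make every predicate "decidable").              *)
Inductive recf : Type :=
| RZero : recf
| RSucc : recf
| RProj : nat -> recf
| RComp : recf -> list recf -> recf
| RPrim : recf -> recf -> recf
| RMu   : recf -> recf.

Inductive reval : recf -> seq nat -> nat -> Prop :=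
| ev_zero v : reval RZero v 0
| ev_succ x v : reval RSucc (x :: v) x.+1
| ev_proj i v : i < size v -> reval (RProj i) v (nth 0 v i)
| ev_comp f gs v ys y : revals gs v ys -> reval f ys y -> reval (RComp f gs) v y
| ev_prim0 f g v y : reval f v y -> reval (RPrim f g) (0 :: v) y
| ev_primS f g n v r y :
    reval (RPrim f g) (n :: v) r -> reval g (n :: r :: v) y ->
    reval (RPrim f g) (n.+1 :: v) y
| ev_mu f v n :
    reval f (n :: v) 0 ->
    (forall m, m < n -> exists k, reval f (m :: v) k.+1) ->
    reval (RMu f) v n
with revals : seq recf -> seq nat -> seq nat -> Prop :=
| evs_nil v : revals [::] v [::]
| evs_cons g gs v y ys : reval g v y -> revals gs v ys -> revals (g :: gs) v (y :: ys).

(* A (promise) problem on a countable input type X, inputs encoded in nat by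
   the canonical (computable) [pickle] encoding: it is decidable if some
   partial recursive function outputs 1 on yes-instances and 0 on
   no-instances among the inputs satisfying the promise [Dom]. *)
Definition decidable_on (X : countType) (Dom P : X -> Prop) : Prop :=
  exists f : recf, forall x : X, Dom x ->
    (P x -> reval f [:: pickle x] 1) /\ (~ P x -> reval f [:: pickle x] 0).

(* NFA: (initial state, transitions (p, a, q), final states). *)
Notation nfa L := (nat * seq (nat * L * nat) * seq nat)%type.

Inductive nfa_run (L : eqType) (tr : seq (nat * L * nat)) (fin : seq nat)
  : nat -> seq L -> Prop :=
| run_nil q : q \in fin -> nfa_run tr fin q [::]
| run_cons q a q' w : (q, a, q') \in tr -> nfa_run tr fin q' w ->
                      nfa_run tr fin q (a :: w).

Definition nfa_lang (L : eqType) (M : nfa L) (w : seq L) : Prop :=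
  nfa_run M.1.2 M.2 M.1.1 w.

(* Context-free grammar: (start nonterminal, productions A -> rhs),
   nonterminals are nats, terminals are letters (inr). *)
Notation cfg L := (nat * seq (nat * seq (nat + L)))%type.

Inductive cfg_der (L : eqType) (P : seq (nat * seq (nat + L)))
  : nat -> seq L -> Prop :=
| der_prod A rhs w : (A, rhs) \in P -> cfg_ders P rhs w -> cfg_der P A w
with cfg_ders (L : eqType) (P : seq (nat * seq (nat + L)))
  : seq (nat + L) -> seq L -> Prop :=
| ders_nil : cfg_ders P [::] [::]
| ders_term a rest w : cfg_ders P rest w -> cfg_ders P (inr a :: rest) (a :: w)
| ders_nt A rest u w : cfg_der P A u -> cfg_ders P rest w ->
                       cfg_ders P (inl A :: rest) (u ++ w).

Definition cfg_lang (L : eqType) (Gr : cfg L) (w : seq L) : Prop :=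
  cfg_der Gr.2 Gr.1 w.

Definition is_group (G : Type) (mul : G -> G -> G) (one : G) (inv : G -> G) :=
  [/\ forall x y z, mul x (mul y z) = mul (mul x y) z,
      forall x, mul one x = x, forall x, mul x one = x,
      forall x, mul (inv x) x = one & forall x, mul x (inv x) = one].

Definition weval (X L : Type) (mul : X -> X -> X) (one : X) (ev : L -> X)
  (w : seq L) : X := foldr (fun a acc => mul (ev a) acc) one w.

Definition in_subset (X L D : Type) (mul : X -> X -> X) (one : X) (ev : L -> X)
  (lang : D -> seq L -> Prop) (d : D) (x : X) : Prop :=
  exists w, lang d w /\ weval mul one ev w = x.

Definition letG (G : Type) (inv : G -> G) (n : nat) (gens : 'I_n -> G)
  (a : 'I_n * bool) : G := if a.2 then inv (gens a.1) else gens a.1.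

Definition wordG (G : Type) (mul : G -> G -> G) (one : G) (inv : G -> G)
  (n : nat) (gens : 'I_n -> G) (w : seq ('I_n * bool)) : G :=
  weval mul one (letG inv gens) w.

Definition is_aut (G : Type) (mul : G -> G -> G) (psi psiinv : G -> G) :=
  [/\ forall x y, psi (mul x y) = mul (psi x) (psi y),
      cancel psi psiinv & cancel psiinv psi].

Definition autpow (G : Type) (psi psiinv : G -> G) (k : int) : G -> G :=
  match k with
  | Posz m => iter m psi
  | Negz m => iter m.+1 psiinv
  end.

(* Semidirect product G x|_psi Z: the pair (k, g) stands for t^k g,    *)
(* with t^-1 a t = psi(a), hence t^k g t^l h = t^(k+l) psi^l(g) h.      *)
Section SD.
Variables (G : Type) (mul : G -> G -> G) (one : G) (inv : G -> G).
Variables (psi psiinv : G -> G).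

Definition sd_mul (x y : int * G) : int * G :=
  (x.1 + y.1, mul (autpow psi psiinv y.1 x.2) y.2)%R.
Definition sd_one : int * G := (0%R, one).
Definition sd_inv (x : int * G) : int * G :=
  ((- x.1)%R, autpow psi psiinv (- x.1)%R (inv x.2)).

Definition sd_let (n : nat) (gens : 'I_n -> G) (a : option 'I_n * bool)
  : int * G :=
  match a.1 with
  | Some i => (0%R, letG inv gens (i, a.2))
  | None => (if a.2 then (-1)%R else 1%R, one)
  end.
End SD.

Definition gcp_prop (X L D : Type) (mul : X -> X -> X) (one : X) (inv : X -> X)
  (ev : L -> X) (lang : D -> seq L -> Prop) (inp : D * seq L) : Prop :=
  exists y : X, in_subset mul one ev lang inp.1
                  (mul (inv y) (mul (weval mul one ev inp.2) y)).

Definition represents_aut (G : Type) (mul : G -> G -> G) (one : G)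
  (inv : G -> G) (n : nat) (gens : 'I_n -> G)
  (psiw : {ffun 'I_n -> seq ('I_n * bool)}) (psi psiinv : G -> G) :=
  is_aut mul psi psiinv /\
  forall i, psi (gens i) = wordG mul one inv gens (psiw i).

Definition valid_aut (G : Type) (mul : G -> G -> G) (one : G)
  (inv : G -> G) (n : nat) (gens : 'I_n -> G)
  (psiw : {ffun 'I_n -> seq ('I_n * bool)}) :=
  exists psi psiinv, represents_aut mul one inv gens psiw psi psiinv.

Definition brcp_prop (G D : Type) (mul : G -> G -> G) (one : G) (inv : G -> G)
  (n : nat) (gens : 'I_n -> G) (lang : D -> seq ('I_n * bool) -> Prop)
  (psi psiinv : G -> G) (inp : D * seq ('I_n * bool)) : Prop :=
  exists (k : int) (z : G),
    in_subset mul one (letG inv gens) lang inp.1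
      (mul (inv z) (mul (autpow psi psiinv k (wordG mul one inv gens inp.2)) z)).

Definition tcp_prop (G D : Type) (mul : G -> G -> G) (one : G) (inv : G -> G)
  (n : nat) (gens : 'I_n -> G) (lang : D -> seq ('I_n * bool) -> Prop)
  (psi : G -> G) (inp : D * seq ('I_n * bool)) : Prop :=
  exists z : G,
    in_subset mul one (letG inv gens) lang inp.1
      (mul (inv (psi z)) (mul (wordG mul one inv gens inp.2) z)).

Definition sd_gcp_prop (G D : Type) (mul : G -> G -> G) (one : G)
  (inv : G -> G) (n : nat) (gens : 'I_n -> G)
  (lang : D -> seq (option 'I_n * bool) -> Prop) (psi psiinv : G -> G)
  (inp : D * seq (option 'I_n * bool)) : Prop :=
  gcp_prop (sd_mul mul psi psiinv) (sd_one one) (sd_inv inv psi psiinv)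
           (sd_let one inv gens) lang inp.

Definition ttrue (X : Type) (_ : X) : Prop := True.

Definition cor_3_10_for (G : Type) (mul : G -> G -> G) (one : G)
  (inv : G -> G) (n : nat) (gens : 'I_n -> G) (phi phiinv : G -> G)
  (DG DS : countType)
  (langG : DG -> seq ('I_n * bool) -> Prop)
  (langS : DS -> seq (option 'I_n * bool) -> Prop) : Prop :=
  (* fixed automorphism phi *)
  (decidable_on (@ttrue (DS * seq (option 'I_n * bool)))
     (sd_gcp_prop mul one inv gens langS phi phiinv) ->
   decidable_on (@ttrue (DG * seq ('I_n * bool)))
     (brcp_prop mul one inv gens langG phi phiinv) /\
   decidable_on (@ttrue (DG * seq ('I_n * bool)))
     (tcp_prop mul one inv gens langG phi))
  /\
  (* uniform versions: the automorphism is part of the input *)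
  (decidable_on
     (fun inp : {ffun 'I_n -> seq ('I_n * bool)} * (DS * seq (option 'I_n * bool))
        => valid_aut mul one inv gens inp.1)
     (fun inp => exists psi psiinv,
        represents_aut mul one inv gens inp.1 psi psiinv /\
        sd_gcp_prop mul one inv gens langS psi psiinv inp.2) ->
   decidable_on
     (fun inp : {ffun 'I_n -> seq ('I_n * bool)} * (DG * seq ('I_n * bool))
        => valid_aut mul one inv gens inp.1)
     (fun inp => exists psi psiinv,
        represents_aut mul one inv gens inp.1 psi psiinv /\
        brcp_prop mul one inv gens langG psi psiinv inp.2) /\
   decidable_on
     (fun inp : {ffun 'I_n -> seq ('I_n * bool)} * (DG * seq ('I_n * bool))
        => valid_aut mul one inv gens inp.1)
     (fun inp => exists psi psiinv,
        represents_aut mul one inv gens inp.1 psi psiinv /\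
        tcp_prop mul one inv gens langG psi inp.2)).

(* Main.v *)
Require Import Defs.
From mathcomp Require Import all_boot all_algebra.
From mathcomp Require Import zify.
Set Implicit Arguments. Unset Strict Implicit. Unset Printing Implicit Defensive.

Record Comp k f (F : seq nat -> nat) : Prop := CompI
  { compE : forall v, size v = k -> reval f v (F v) }.
Record Comps k gs (Gs : seq (seq nat -> nat)) : Prop := CompsI
  { compsE : forall v, size v = k -> revals gs v (map (fun G => G v) Gs) }.

Lemma C_ext k f F F' : Comp k f F -> (forall v, size v = k -> F v = F' v) -> Comp k f F'.
Proof. by case=> H E; constructor=> v sv; rewrite -E //; apply: H. Qed.

Lemma C_zero k : Comp k RZero (fun _ => 0).
Proof. by constructor=> v _; constructor. Qed.

Lemma C_proj k i : i < k -> Comp k (RProj i) (fun v => nth 0 v i).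
Proof. by move=> ik; constructor=> v sv; constructor; rewrite sv. Qed.

Lemma C_succ : Comp 1 RSucc (fun v => (nth 0 v 0).+1).
Proof. by constructor; case=> [|x [|]] //= _; constructor. Qed.

Lemma Cs_nil k : Comps k [::] [::].
Proof. by constructor=> v _; constructor. Qed.

Lemma Cs_cons k g gs G Gs : Comp k g G -> Comps k gs Gs -> Comps k (g :: gs) (G :: Gs).
Proof. by case=> H1 [H2]; constructor=> v sv; constructor; [apply: H1 | apply: H2]. Qed.

Lemma C_comp k m f F gs Gs : Comp m f F -> Comps k gs Gs -> size Gs = m ->
  Comp k (RComp f gs) (fun v => F (map (fun G => G v) Gs)).
Proof. by case=> Hf [Hg] sG; constructor=> v sv; econstructor; [apply: Hg | apply: Hf; rewrite size_map]. Qed.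

Fixpoint primF (F : seq nat -> nat) (G : seq nat -> nat) n v :=
  if n is n'.+1 then G (n' :: primF F G n' v :: v) else F v.

Lemma C_prim k f F g G : Comp k f F -> Comp k.+2 g G ->
  Comp k.+1 (RPrim f g) (fun v => primF F G (nth 0 v 0) (behead v)).
Proof.
case=> Hf [Hg]; constructor; case=> [|a v] //= [sv]; elim: a => [|a IH] /=.
  by constructor; apply: Hf.
by econstructor; [apply: IH | apply: Hg => /=; rewrite sv].
Qed.

Lemma C_mu k f F M : Comp k.+1 f F ->
  (forall v, size v = k -> F (M v :: v) = 0 /\ forall m, m < M v -> F (m :: v) != 0) ->
  Comp k (RMu f) M.
Proof.
case=> Hf HM; constructor=> v sv; have [H0 H1] := HM v sv; constructor.
  by rewrite -H0; apply: Hf; rewrite /= sv.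
move=> m /H1; case E: (F (m :: v)) => [|x] // _; exists x; rewrite -E.
by apply: Hf; rewrite /= sv.
Qed.

Definition projs a j := map RProj (iota a j).
Lemma Cs_projs k a j : a + j <= k ->
  Comps k (projs a j) (map (fun i v => nth 0 v i) (iota a j)).
Proof.
elim: j a => [|j IH] a aj; first exact: Cs_nil.
apply: Cs_cons; first by apply: C_proj; apply: leq_trans aj; rewrite addnS ltnS leq_addr.
by apply: IH; rewrite addSnnS.
Qed.

Lemma map_projs a j v : a + j = size v ->
  map (fun G => G v) (map (fun i v => nth 0 v i) (iota a j)) = drop a v.
Proof.
move=> E; rewrite -map_comp /comp map_nth_iota; last by rewrite -E addKn.
by rewrite take_oversize // size_drop -E addKn.
Qed.

Definition rc1 f g := RComp f [:: g].
Definition rc2 f g h := RComp f [:: g; h].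
Definition rc3 f g h i := RComp f [:: g; h; i].

Lemma C_c1 k f F g G : Comp 1 f F -> Comp k g G -> Comp k (rc1 f g) (fun v => F [:: G v]).
Proof. by move=> Hf Hg; exact: (C_comp Hf (Cs_cons Hg (Cs_nil k)) (erefl 1)). Qed.
Lemma C_c2 k f F g G h H : Comp 2 f F -> Comp k g G -> Comp k h H ->
  Comp k (rc2 f g h) (fun v => F [:: G v; H v]).
Proof. by move=> Hf Hg Hh; exact: (C_comp Hf (Cs_cons Hg (Cs_cons Hh (Cs_nil k))) (erefl 2)). Qed.
Lemma C_c3 k f F g G h H i I : Comp 3 f F -> Comp k g G -> Comp k h H -> Comp k i I ->
  Comp k (rc3 f g h i) (fun v => F [:: G v; H v; I v]).
Proof. by move=> Hf Hg Hh Hi; exact: (C_comp Hf (Cs_cons Hg (Cs_cons Hh (Cs_cons Hi (Cs_nil k)))) (erefl 3)). Qed.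

Notation a0 v := (nth 0 v 0).
Notation a1 v := (nth 0 v 1).
Notation a2 v := (nth 0 v 2).

Fixpoint rconst c := if c is c'.+1 then rc1 RSucc (rconst c') else RZero.
Lemma C_const k c : Comp k (rconst c) (fun _ => c).
Proof. elim: c => [|c IH] /=; first exact: C_zero. exact: C_c1 C_succ IH. Qed.

Definition rid := RProj 0.


Ltac comp_base := fail.
Ltac comp := repeat first [ comp_base | apply: C_c1 | apply: C_c2 | apply: C_c3
  | apply: C_const | apply: C_zero | apply: C_succ | (apply: C_proj; done) ].

Definition radd := RPrim (RProj 0) (rc1 RSucc (RProj 1)).
Lemma C_add : Comp 2 radd (fun v => a0 v + a1 v).
Proof.
eapply C_ext; first by apply: C_prim; comp.
case=> [|a [|b []]] //= _; elim: a => //= a ->; by [].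
Qed.
Ltac comp_base ::= first [ apply: C_add ].

Definition rmul := RPrim RZero (rc2 radd (RProj 1) (RProj 2)).
Lemma C_mul : Comp 2 rmul (fun v => a0 v * a1 v).
Proof.
eapply C_ext; first by apply: C_prim; comp.
case=> [|a [|b []]] //= _; elim: a => //= a ->; by rewrite mulSn addnC.
Qed.
Ltac comp_base ::= first [ apply: C_add | apply: C_mul ].

Definition rpred := RPrim RZero (RProj 0).
Lemma C_pred : Comp 1 rpred (fun v => (a0 v).-1).
Proof.
eapply C_ext; first by apply: C_prim; comp.
by case=> [|a []] //= _; case: a.
Qed.
Ltac comp_base ::= first [ apply: C_add | apply: C_mul | apply: C_pred ].

Definition rsub' := RPrim (RProj 0) (rc1 rpred (RProj 1)).
Lemma C_sub' : Comp 2 rsub' (fun v => a1 v - a0 v).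
Proof.
eapply C_ext; first by apply: C_prim; comp.
case=> [|b [|a []]] //= _; elim: b => [|b IH] /=; first by rewrite subn0.
by rewrite IH subnS.
Qed.
Definition rsub := rc2 rsub' (RProj 1) (RProj 0).
Lemma C_sub : Comp 2 rsub (fun v => a0 v - a1 v).
Proof. by eapply C_ext; [apply: C_c2; [exact: C_sub' | comp | comp] | ]. Qed.
Ltac comp_base ::= first [ apply: C_add | apply: C_mul | apply: C_pred | apply: C_sub ].

Definition rpow2 := RPrim (rconst 1) (rc2 radd (RProj 1) (RProj 1)).
Lemma C_pow2 : Comp 1 rpow2 (fun v => 2 ^ a0 v).
Proof.
eapply C_ext; first by apply: C_prim; comp.
case=> [|a []] //= _; elim: a => //= a ->; by rewrite expnS mul2n addnn.
Qed.
Ltac comp_base ::= first [ apply: C_add | apply: C_mul | apply: C_pred | apply: C_sub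
  | apply: C_pow2 ].

Definition rdiv2 := RMu (rc2 rsub (rconst 1)
   (rc2 rsub (rc2 rmul (rc1 RSucc (RProj 0)) (rc1 rpow2 (RProj 2))) (RProj 1))).
Lemma C_div2 : Comp 2 rdiv2 (fun v => a0 v %/ 2 ^ a1 v).
Proof.
eapply C_mu; first by comp.
case=> [|m [|j []]] //= _; set d := 2 ^ j; have d0 : 0 < d by rewrite expn_gt0.
split.
  by apply/eqP; rewrite subn_eq0 lt0n subn_eq0 -ltnNge ltn_ceil.
move=> q qM; rewrite subn_eq0 -ltnNge ltnS leqn0 subn_eq0.
by apply: leq_trans (leq_divM m d); rewrite leq_mul2r qM orbT.
Qed.
Ltac comp_base ::= first [ apply: C_add | apply: C_mul | apply: C_pred | apply: C_sub
  | apply: C_pow2 | apply: C_div2 ].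

Definition hdc m := head 0 (CodeSeq.decode m).
Definition tlc m := CodeSeq.code (behead (CodeSeq.decode m)).

Lemma code_cons x s : CodeSeq.code (x :: s) = 2 ^ x * (CodeSeq.code s).*2.+1.
Proof. by []. Qed.

(* test [k; m] = m * (1 - (m - m %/ 2^(k+1) * 2^(k+1))) *)
Definition rhead := RMu (rc2 rmul (RProj 1) (rc2 rsub (rconst 1)
   (rc2 rsub (RProj 1) (rc2 rmul (rc2 rdiv2 (RProj 1) (rc1 RSucc (RProj 0)))
                                  (rc1 rpow2 (rc1 RSucc (RProj 0))))))).

Lemma modE m d : m - m %/ d * d = m %% d.
Proof. by rewrite {1}(divn_eq m d) addnC addnK. Qed.

Lemma dvdnE' m d : (m %% d == 0) = (d %| m). Proof. by []. Qed.

Lemma C_head : Comp 1 rhead (fun v => hdc (a0 v)).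
Proof.
eapply C_mu; first by comp.
case=> [|m []] //= _; rewrite !modE /hdc.
rewrite -(CodeSeq.decodeK m); case: (CodeSeq.decode m) => [|x s]; rewrite CodeSeq.codeK //=.
set c := (CodeSeq.code s).*2.+1.
have c0 : 0 < c by [].
split.
  apply/eqP; rewrite muln_eq0 subn_eq0 lt0n dvdnE' expnSr dvdn_pmul2l ?expn_gt0 //.
  by rewrite dvdn2 /c /= odd_double orbT.
move=> k kx; rewrite modE muln_eq0 negb_or muln_eq0 expn_eq0 /=.
have /eqP -> : (2 ^ x * c) %% 2 ^ k.+1 == 0.
  by rewrite dvdnE'; apply: dvdn_mulr; apply: dvdn_exp2l.
by [].
Qed.
Ltac comp_base ::= first [ apply: C_add | apply: C_mul | apply: C_pred | apply: C_sub
  | apply: C_pow2 | apply: C_div2 | apply: C_head ].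

Lemma hdc_code s : hdc (CodeSeq.code s) = head 0 s.
Proof. by rewrite /hdc CodeSeq.codeK. Qed.
Lemma tlc_code s : tlc (CodeSeq.code s) = CodeSeq.code (behead s).
Proof. by rewrite /tlc CodeSeq.codeK. Qed.

Definition rtail := rc2 rdiv2 (RProj 0) (rc1 RSucc (rc1 rhead (RProj 0))).
Lemma C_tail : Comp 1 rtail (fun v => tlc (a0 v)).
Proof.
eapply C_ext; first by comp.
case=> [|m []] //= _; rewrite -(CodeSeq.decodeK m).
rewrite hdc_code tlc_code; case: (CodeSeq.decode m) => [|x s] //=.
rewrite expnSr divnMl ?expn_gt0 // divn2.
by rewrite -[(CodeSeq.code s).*2.+1]/(true + (CodeSeq.code s).*2) half_bit_double.
Qed.
Ltac comp_base ::= first [ apply: C_add | apply: C_mul | apply: C_pred | apply: C_sub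
  | apply: C_pow2 | apply: C_div2 | apply: C_head | apply: C_tail ].

Definition rit := RPrim (RProj 0) (rc1 rtail (RProj 1)).
Lemma C_it : Comp 2 rit (fun v => iter (a0 v) tlc (a1 v)).
Proof.
eapply C_ext; first by apply: C_prim; comp.
case=> [|j [|m []]] //= _; elim: j => //= j ->; by [].
Qed.
Ltac comp_base ::= first [ apply: C_add | apply: C_mul | apply: C_pred | apply: C_sub
  | apply: C_pow2 | apply: C_div2 | apply: C_head | apply: C_tail | apply: C_it ].

Lemma iter_tlc j s : iter j tlc (CodeSeq.code s) = CodeSeq.code (drop j s).
Proof.
elim: j => [|j IH] /=; first by rewrite drop0.
by rewrite IH tlc_code -[drop j.+1 s]/(drop (1 + j) s) -drop_drop drop1.
Qed.

Lemma code_eq0 s : (CodeSeq.code s == 0) = (s == [::]).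
Proof. by case: s => //= x s; rewrite muln_eq0 expn_eq0. Qed.

Definition rlen := RMu rit.
Lemma C_len : Comp 1 rlen (fun v => size (CodeSeq.decode (a0 v))).
Proof.
eapply C_mu; first by comp.
case=> [|m []] //= _; rewrite -(CodeSeq.decodeK m) CodeSeq.codeK.
set s := CodeSeq.decode m; rewrite iter_tlc drop_size; split => // j js.
by rewrite iter_tlc code_eq0 -size_eq0 size_drop subn_eq0 -ltnNge.
Qed.

Definition rnth := rc1 rhead rit.
Lemma C_nth : Comp 2 rnth (fun v => nth 0 (CodeSeq.decode (a1 v)) (a0 v)).
Proof.
eapply C_ext; first by comp.
case=> [|j [|m []]] //= _; rewrite -{1}(CodeSeq.decodeK m) iter_tlc hdc_code.
by rewrite -nth0 nth_drop addn0.
Qed.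

Definition rcns := rc2 rmul (rc1 rpow2 (RProj 0)) (rc1 RSucc (rc2 radd (RProj 1) (RProj 1))).
Lemma C_cons : Comp 2 rcns (fun v => CodeSeq.code (a0 v :: CodeSeq.decode (a1 v))).
Proof.
eapply C_ext; first by comp.
by case=> [|a [|c []]] //= _; rewrite CodeSeq.decodeK addnn.
Qed.
Ltac comp_base ::= first [ apply: C_add | apply: C_mul | apply: C_pred | apply: C_sub
  | apply: C_pow2 | apply: C_div2 | apply: C_head | apply: C_tail | apply: C_it
  | apply: C_len | apply: C_nth | apply: C_cons ].

Lemma C_sh j k g G : Comp k g G -> Comp (j + k) (RComp g (projs j k)) (fun w => G (drop j w)).
Proof.
move=> Hg; eapply C_ext; first have sz : size (map (fun i v => nth 0 v i) (iota j k)) = k by rewrite size_map size_iota.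
  exact: (C_comp Hg (Cs_projs (leqnn _)) sz).
by move=> v sv /=; rewrite map_projs.
Qed.

Lemma C_cons_sh j k f F e E : Comp k.+1 f F -> Comp (j + k) e E ->
  Comp (j + k) (RComp f (e :: projs j k)) (fun w => F (E w :: drop j w)).
Proof.
move=> Hf He; eapply C_ext.
  apply: (C_comp Hf (Cs_cons He (Cs_projs (leqnn _)))); by rewrite /= size_map size_iota.
by move=> v sv /=; rewrite map_projs.
Qed.

Section Map.
Variables (k : nat) (f l : recf) (F L : seq nat -> nat).
Hypotheses (Hf : Comp k.+1 f F) (Hl : Comp k l L).

Definition Lsh := RComp l (projs 2 k).
Definition mstep := rc2 rcns (RComp f (rc2 rnth (rc2 rsub (rc1 rlen Lsh) (rc1 RSucc (RProj 0))) Lsh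
                                      :: projs 2 k)) (RProj 1).
Definition mapc := RComp (RPrim RZero mstep) (rc1 rlen l :: projs 0 k).

Lemma C_map : Comp k mapc (fun v => CodeSeq.code (map (fun x => F (x :: v)) (CodeSeq.decode (L v)))).
Proof.
have HL : Comp k.+2 Lsh (fun w => L (drop 2 w)) by exact: (C_sh 2 Hl).
have Hs : Comp k.+2 mstep (fun w => CodeSeq.code
   (F (nth 0 (CodeSeq.decode (L (drop 2 w))) (size (CodeSeq.decode (L (drop 2 w))) - (a0 w).+1)
        :: drop 2 w) :: CodeSeq.decode (a1 w))).
  have He := C_c2 C_nth (C_c2 C_sub (C_c1 C_len HL) (C_c1 C_succ (@C_proj k.+2 0 erefl))) HL.
  have Hfx := C_cons_sh (j:=2) Hf He.
  have Hs' := C_c2 C_cons Hfx (@C_proj k.+2 1 erefl).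
  by apply: C_ext Hs' _ => w _.
have Hp := C_prim (C_zero k) Hs.
eapply C_ext; first exact: (C_cons_sh (j := 0) Hp (C_c1 C_len Hl)).
move=> v sv /=; rewrite drop0.
set s := CodeSeq.decode (L v).
suff H : forall i, i <= size s -> primF (fun=> 0)
  (fun w => CodeSeq.code
   (F (nth 0 (CodeSeq.decode (L (drop 2 w))) (size (CodeSeq.decode (L (drop 2 w))) - (a0 w).+1)
        :: drop 2 w) :: CodeSeq.decode (a1 w))) i v
  = CodeSeq.code [seq F (x :: v) | x <- drop (size s - i) s].
  by rewrite H // subnn drop0.
elim=> [|i IH] si /=; first by rewrite subn0 drop_size.
rewrite IH ?(ltnW si) // CodeSeq.codeK -/s.
rewrite [drop (size s - i) s](_ : _ = drop (size s - i.+1).+1 s); last by rewrite subnSK.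
rewrite [in RHS](drop_nth 0); first by rewrite drop0. 
by rewrite -subSn // subSS leq_subr.
Qed.
End Map.

Definition rif k a b c := RComp (RPrim b (RComp c (projs 2 k))) (a :: projs 0 k).
Lemma C_if k a b c A B C : Comp k a A -> Comp k b B -> Comp k c C ->
  Comp k (rif k a b c) (fun v => if A v is 0 then B v else C v).
Proof.
move=> Ha Hb Hc; have Hp := C_prim Hb (C_sh 2 Hc).
eapply C_ext; first exact: (C_cons_sh (j := 0) Hp Ha).
by move=> v sv /=; rewrite drop0; case: (A v) => [|n] /=; rewrite ?drop0.
Qed.

Inductive ex :=
| EArg of nat | EConst of nat | ENth of ex & nat | ECons of ex & ex
| EMap of ex & ex | EIf0 of ex & ex & ex.

Fixpoint eval (e : ex) (v : seq nat) : nat :=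
  match e with
  | EArg i => nth 0 v i
  | EConst c => c
  | ENth e i => nth 0 (CodeSeq.decode (eval e v)) i
  | ECons a b => CodeSeq.code (eval a v :: CodeSeq.decode (eval b v))
  | EMap b l => CodeSeq.code (map (fun x => eval b (x :: v)) (CodeSeq.decode (eval l v)))
  | EIf0 a b c => if eval a v is 0 then eval b v else eval c v
  end.

Fixpoint compile (k : nat) (e : ex) : recf :=
  match e with
  | EArg i => if i < k then RProj i else RZero
  | EConst c => rconst c
  | ENth e i => rc2 rnth (rconst i) (compile k e)
  | ECons a b => rc2 rcns (compile k a) (compile k b)
  | EMap b l => mapc k (compile k.+1 b) (compile k l)
  | EIf0 a b c => rif k (compile k a) (compile k b) (compile k c)
  end.

Lemma C_compile e k : Comp k (compile k e) (eval e).
Proof.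
elim: e k => [i|c|e IH i|a IHa b IHb|b IHb l IHl|a IHa b IHb c IHc] k /=.
- case: ifP => ik; first exact: C_proj.
  eapply C_ext; first exact: C_zero.
  by move=> v sv; rewrite nth_default // sv leqNgt ik.
- exact: C_const.
- by eapply C_ext; [apply: C_c2; [exact: C_nth | exact: C_const | exact: IH] | ].
- by eapply C_ext; [apply: C_c2; [exact: C_cons | exact: IHa | exact: IHb] | ].
- exact: C_map.
- exact: C_if.
Qed.

Section Grp.
Variables (G : Type) (mul : G -> G -> G) (one : G) (inv : G -> G).
Hypothesis HG : is_group mul one inv.
Local Notation "x * y" := (mul x y).

Lemma mulA x y z : x * (y * z) = (x * y) * z. Proof. by case: HG. Qed.
Lemma mul1g x : one * x = x. Proof. by case: HG. Qed.
Lemma mulg1 x : x * one = x. Proof. by case: HG. Qed.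
Lemma mulVg x : inv x * x = one. Proof. by case: HG. Qed.
Lemma mulgV x : x * inv x = one. Proof. by case: HG. Qed.
Lemma mulKg x y : inv x * (x * y) = y. Proof. by rewrite mulA mulVg mul1g. Qed.
Lemma mulKVg x y : x * (inv x * y) = y. Proof. by rewrite mulA mulgV mul1g. Qed.
Lemma inv_uniq x y : x * y = one -> y = inv x.
Proof. by move=> E; rewrite -(mulKg x y) E mulg1. Qed.
Lemma invK x : inv (inv x) = x.
Proof. by symmetry; apply: inv_uniq; rewrite mulVg. Qed.
Lemma invM x y : inv (x * y) = inv y * inv x.
Proof. by symmetry; apply: inv_uniq; rewrite -mulA (mulA y) mulgV mul1g mulgV. Qed.
Lemma inv1 : inv one = one.
Proof. by symmetry; apply: inv_uniq; rewrite mul1g. Qed.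

Variables (psi psiinv : G -> G).
Hypothesis Hpsi : is_aut mul psi psiinv.

Lemma psiM x y : psi (x * y) = psi x * psi y. Proof. by case: Hpsi. Qed.
Lemma psiK x : psiinv (psi x) = x. Proof. by case: Hpsi => _ H _; apply: H. Qed.
Lemma psiKV x : psi (psiinv x) = x. Proof. by case: Hpsi => _ _ H; apply: H. Qed.
Lemma psi1 : psi one = one.
Proof.
have E : psi one * psi one = psi one by rewrite -psiM mulg1.
by rewrite -[LHS](mulKg (psi one)) E mulVg.
Qed.
Lemma psiV x : psi (inv x) = inv (psi x).
Proof. by apply: inv_uniq; rewrite -psiM mulgV psi1. Qed.
Lemma psiinvM x y : psiinv (x * y) = psiinv x * psiinv y.
Proof. by rewrite -{1}[x]psiKV -{1}[y]psiKV -psiM psiK. Qed.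
Lemma psiinvV x : psiinv (inv x) = inv (psiinv x).
Proof. by rewrite -{1}[x]psiKV -psiV psiK. Qed.

Local Notation ap := (autpow psi psiinv).

Lemma iterM (f : G -> G) : (forall x y, f (x * y) = f x * f y) ->
  forall m x y, iter m f (x * y) = iter m f x * iter m f y.
Proof. by move=> H; elim=> //= m IH x y; rewrite IH H. Qed.
Lemma iterV (f : G -> G) : (forall x, f (inv x) = inv (f x)) ->
  forall m x, iter m f (inv x) = inv (iter m f x).
Proof. by move=> H; elim=> //= m IH x; rewrite IH H. Qed.

Lemma apM k x y : ap k (x * y) = ap k x * ap k y.
Proof. case: k => m; [exact: (iterM psiM) | exact: (iterM psiinvM)]. Qed.
Lemma apV k x : ap k (inv x) = inv (ap k x).
Proof. case: k => m; [exact: (iterV psiV) | exact: (iterV psiinvV)]. Qed.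

Lemma iterK m x : iter m psiinv (iter m psi x) = x.
Proof. by elim: m x => // m IH x; rewrite iterSr iterS psiK IH. Qed.
Lemma iterKV m x : iter m psi (iter m psiinv x) = x.
Proof. by elim: m x => // m IH x; rewrite iterSr iterS psiKV IH. Qed.

Lemma ap_pos m y : ap (Posz m) y = iter m psi y. Proof. by []. Qed.
Lemma ap_neg m y : ap (Negz m) y = iter m.+1 psiinv y. Proof. by []. Qed.
Lemma oppPS m : (- Posz m.+1 = Negz m)%R. Proof. by []. Qed.
Lemma oppN m : (- Negz m = Posz m.+1)%R. Proof. by []. Qed.

Lemma apN k y : ap k (ap (- k)%R y) = y.
Proof.
case: k => [[|m]|m] //; first by rewrite oppPS ap_pos ap_neg iterKV.
by rewrite oppN ap_pos ap_neg iterK.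
Qed.

Lemma apNS k y : ap (1 + k)%R (ap (- k)%R y) = psi y.
Proof.
case: k => [[|m]|[|m]] //.
- have -> : (1 + Posz m.+1 = Posz m.+2)%R by [].
  by rewrite oppPS ap_pos ap_neg iterS iterKV.
- have -> : (1 + Negz m.+1 = Negz m)%R by lia.
  by rewrite oppN ap_pos ap_neg (iterSr m.+1) iterK.
Qed.

Lemma ap0 y : ap 0%R y = y. Proof. by []. Qed.

Definition tw u x := inv (psi u) * (x * u).
Lemma tw1 x : tw one x = x. Proof. by rewrite /tw psi1 inv1 mul1g mulg1. Qed.
Lemma tw_comp g u x : tw g (tw u x) = tw (u * g) x.
Proof. by rewrite /tw psiM invM !mulA -!mulA. Qed.
Lemma psi_tw u x : psi (tw u x) = tw (inv x * psi u) x.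
Proof.
by rewrite /tw mulKVg !psiM !psiV invM invK -mulA.
Qed.
Lemma psiinv_tw u x : psiinv (tw u x) = tw (psiinv x * psiinv u) x.
Proof.
by rewrite /tw !psiinvM psiinvV psiK psiM !psiKV invM -mulA mulKg.
Qed.

Lemma ap_tw k x : exists u, ap k x = tw u x.
Proof.
have H1 m : exists u, iter m psi x = tw u x.
  elim: m => [|m [u IH]] /=; first by exists one; rewrite tw1.
  by rewrite IH psi_tw; eexists.
have H2 m : exists u, iter m psiinv x = tw u x.
  elim: m => [|m [u IH]] /=; first by exists one; rewrite tw1.
  by rewrite IH psiinv_tw; eexists.
by case: k => m; [exact: H1 | exact: H2].
Qed.
End Grp.

Definition liftL n (a : 'I_n * bool) : option 'I_n * bool := (Some a.1, a.2).
Definition tL n : option 'I_n * bool := (None, false).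

Section SDP.
Variables (G : Type) (mul : G -> G -> G) (one : G) (inv : G -> G).
Hypothesis HG : is_group mul one inv.
Variables (n : nat) (gens : 'I_n -> G) (psi psiinv : G -> G).
Hypothesis Hpsi : is_aut mul psi psiinv.

Local Notation smul := (sd_mul mul psi psiinv).
Local Notation sone := (sd_one one).
Local Notation sinv := (sd_inv inv psi psiinv).
Local Notation slet := (sd_let one inv gens).
Local Notation ap := (autpow psi psiinv).
Local Notation wG := (wordG mul one inv gens).

Lemma sd_word w : weval smul sone slet (map (@liftL n) w) = (0%R, wG w).
Proof.
elim: w => [|[i b] w IH] //=; rewrite IH /sd_mul /=.
by [].
Qed.

Lemma sd_wordT w : weval smul sone slet (tL n :: map (@liftL n) w) = (1%R, wG w).
Proof. by rewrite /= sd_word /sd_mul /= (mul1g HG). Qed.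

Lemma sd_conj k g x : smul (sinv (k, g)) (smul (0%R, x) (k, g)) = (0%R, mul (inv g) (mul (ap k x) g)).
Proof.
rewrite /sd_mul /sd_inv /=.
have -> : (- k + (0 + k) = 0)%R by lia.
have -> : (0 + k = k)%R by lia.
by rewrite (apN Hpsi).
Qed.

Lemma sd_conjT k g x : smul (sinv (k, g)) (smul (1%R, x) (k, g)) = (1%R, mul (inv (psi g)) (mul (ap k x) g)).
Proof.
rewrite /sd_mul /sd_inv /=.
have -> : (- k + (1 + k) = 1)%R by lia.
by rewrite (apNS Hpsi) (psiV HG Hpsi).
Qed.

Variables (DG DS : Type) (langG : DG -> seq ('I_n * bool) -> Prop)
  (langS : DS -> seq (option 'I_n * bool) -> Prop).

Lemma sd_brcp dG dS w :
  (forall w', langS dS w' <-> exists w0, w' = map (@liftL n) w0 /\ langG dG w0) ->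
  sd_gcp_prop mul one inv gens langS psi psiinv (dS, map (@liftL n) w) <->
  brcp_prop mul one inv gens langG psi psiinv (dG, w).
Proof.
move=> HL; rewrite /sd_gcp_prop /gcp_prop /brcp_prop /in_subset /= sd_word; split.
  case=> [[k g]] [w'] [/HL [w0 [-> Hw0]]]; rewrite sd_conj sd_word => [[E]].
  by exists k, g, w0.
case=> k [g] [w0 [Hw0 E]]; exists (k, g), (map (@liftL n) w0); split.
  by apply/HL; exists w0.
by rewrite sd_conj sd_word /wordG E.
Qed.

Lemma sd_tcp dG dS w :
  (forall w', langS dS w' <-> exists w0, w' = tL n :: map (@liftL n) w0 /\ langG dG w0) ->
  sd_gcp_prop mul one inv gens langS psi psiinv (dS, tL n :: map (@liftL n) w) <->
  tcp_prop mul one inv gens langG psi (dG, w).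
Proof.
move=> HL; rewrite /sd_gcp_prop /gcp_prop /tcp_prop /in_subset sd_wordT; split.
  case=> [[k g]] [w'] [/HL [w0 [-> Hw0]]]; rewrite sd_conjT sd_wordT => [[E]].
  have [u Eu] := ap_tw HG Hpsi k (wG w).
  exists (mul u g), w0; split => //; rewrite -[LHS]/(wG w0) E Eu.
  by rewrite -/(tw mul inv psi g _) (tw_comp HG Hpsi).
case=> g [w0 [Hw0 E]]; exists (0%R, g), (tL n :: map (@liftL n) w0); split.
  by apply/HL; exists w0.
by rewrite sd_conjT sd_wordT /wordG E.
Qed.
End SDP.

Lemma ltc x s : x \in s -> x < CodeSeq.code s.
Proof. by move=> xs; have /allP := CodeSeq.ltn_code s; apply. Qed.

Lemma nfa_run_inv (L : eqType) tr fin p (w : seq L) : nfa_run tr fin p w ->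
  (w = [::] /\ p \in fin) \/ exists a p' u, [/\ w = a :: u, (p, a, p') \in tr & nfa_run tr fin p' u].
Proof. by case=> [q qf|q a q' u tin H]; [left | right; exists a, q', u]. Qed.

Section NFA.
Variable n : nat.
Local Notation L := ('I_n * bool)%type.
Local Notation L' := (option 'I_n * bool)%type.

Definition liftT (t : nat * L * nat) : nat * L' * nat := (t.1.1, liftL t.1.2, t.2).
Definition mapN (M : nfa L) : nfa L' := ((M.1.1, map liftT M.1.2), M.2).
Definition tN (M : nfa L) : nfa L' :=
  let q := pickle M in ((q, (q, tL n, M.1.1) :: map liftT M.1.2), M.2).

Lemma run_map tr fin q w' : nfa_run (map liftT tr) fin q w' <->
  exists w, w' = map (@liftL n) w /\ nfa_run tr fin q w.
Proof.
split.
  elim=> [p pf|p a p' u /mapP [[[p0 b] p1] tin [-> -> ->]] _ [w [-> IH]]].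
    by exists [::]; split => //; constructor.
  by exists (b :: w); split => //; econstructor; eauto.
case=> w [->]; elim=> [p pf|p a p' u tin _ IH] /=; first by constructor.
by econstructor; [apply/mapP; exists (p, a, p') | exact: IH].
Qed.

Lemma lang_mapN M w' : nfa_lang (mapN M) w' <->
  exists w, w' = map (@liftL n) w /\ nfa_lang M w.
Proof. exact: run_map. Qed.

Lemma fresh_nfa (M : nfa L) :
  [/\ M.1.1 < pickle M, forall f, f \in M.2 -> f < pickle M &
      forall t, t \in M.1.2 -> t.1.1 < pickle M /\ t.2 < pickle M].
Proof.
case: M => [[s tr] fin] /=.
have E : pickle ((s, tr), fin) = CodeSeq.code [:: CodeSeq.code [:: s; pickle tr]; pickle fin] by [].
have H1 : CodeSeq.code [:: s; pickle tr] < pickle ((s, tr), fin) by rewrite E; apply: ltc; rewrite inE eqxx.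
have H2 : pickle fin < pickle ((s, tr), fin) by rewrite E; apply: ltc; rewrite !inE eqxx orbT.
have H3 : pickle tr < pickle ((s, tr), fin).
  by apply: ltn_trans H1; apply: ltc; rewrite !inE eqxx orbT.
split.
- by apply: ltn_trans H1; apply: ltc; rewrite inE eqxx.
- move=> f ff; apply: ltn_trans H2.
  have -> : pickle fin = CodeSeq.code (map pickle fin) by [].
  by apply: ltc; apply/mapP; exists f.
- move=> [[p a] q] tin /=.
  have Ht : pickle (p, a, q) < pickle tr.
    have -> : pickle tr = CodeSeq.code (map pickle tr) by [].
    by apply: ltc; apply/mapP; exists (p, a, q).
  have Et : pickle (p, a, q) = CodeSeq.code [:: CodeSeq.code [:: p; pickle a]; q] by [].
  have Hpa : CodeSeq.code [:: p; pickle a] < pickle (p, a, q) by rewrite Et; apply: ltc; rewrite inE eqxx.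
  split.
    apply: ltn_trans (ltn_trans Hpa (ltn_trans Ht H3)).
    by apply: ltc; rewrite inE eqxx.
  apply: ltn_trans (ltn_trans Ht H3).
  by rewrite Et; apply: ltc; rewrite !inE eqxx orbT.
Qed.

Lemma lang_tN M w' : nfa_lang (tN M) w' <->
  exists w, w' = tL n :: map (@liftL n) w /\ nfa_lang M w.
Proof.
have [Hs Hf Ht] := fresh_nfa M.
set q := pickle M.
set tr' := (q, tL n, M.1.1) :: map liftT M.1.2.
have Hq p : p \in [seq t.2 | t <- map liftT M.1.2] -> p != q.
  case/mapP=> t /mapP [t0 t0in ->] -> /=; have [_ H] := Ht t0 t0in.
  by rewrite neq_ltn H.
have Hq1 p : p \in [seq t.1.1 | t <- map liftT M.1.2] -> p != q.
  case/mapP=> t /mapP [t0 t0in ->] -> /=; have [H _] := Ht t0 t0in.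
  by rewrite neq_ltn H.
have claim p u : p != q -> nfa_run tr' M.2 p u <-> nfa_run (map liftT M.1.2) M.2 p u.
  move=> pq; split.
    move=> H; elim: H pq => [p0 pf|p0 a p' u0 tin _ IH] pq; first by constructor.
    move: tin; rewrite inE => /orP [/eqP [E _ _]|tin]; first by rewrite E eqxx in pq.
    econstructor; first exact: tin.
    by apply: IH; apply: Hq; apply/mapP; exists (p0, a, p').
  elim=> [p0 pf|p0 a p' u0 tin _ IH]; first by constructor.
  by econstructor; [apply: mem_behead; exact: tin | exact: IH].
have sq : M.1.1 != q by rewrite neq_ltn Hs.
rewrite /nfa_lang /=; split.
  move/nfa_run_inv => [[_ pf]|[a [p' [u [-> tin H]]]]].
    by have := Hf q pf; rewrite ltnn.
  move: tin; rewrite inE => /orP [/eqP [-> Ep]|tin]; first rewrite Ep in H.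
    by move/(claim _ _ sq)/run_map: H => [w [-> Hw]]; exists w.
  by have := Hq1 q; rewrite eqxx; move=> /(_ (map_f _ tin)).
case=> w [-> Hw]; econstructor; first exact: mem_head.
by apply/(claim _ _ sq)/run_map; exists w.
Qed.
End NFA.

Scheme der_mut := Induction for cfg_der Sort Prop
with ders_mut := Induction for cfg_ders Sort Prop.

Section CFG.
Variable n : nat.
Local Notation L := ('I_n * bool)%type.
Local Notation L' := (option 'I_n * bool)%type.

Definition liftS (x : nat + L) : nat + L' :=
  match x with inl A => inl A | inr a => inr (liftL a) end.
Definition liftP (p : nat * seq (nat + L)) : nat * seq (nat + L') := (p.1, map liftS p.2).
Definition mapG (g : cfg L) : cfg L' := (g.1, map liftP g.2).
Definition tG (g : cfg L) : cfg L' :=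
  let q := pickle g in (q, (q, [:: inr (tL n); inl g.1]) :: map liftP g.2).

Lemma der_map1 P A w : cfg_der P A w -> cfg_der (map liftP P) A (map (@liftL n) w).
Proof.
move=> H.
apply: (@der_mut L P (fun A w _ => cfg_der (map liftP P) A (map (@liftL n) w))
   (fun rhs w _ => cfg_ders (map liftP P) (map liftS rhs) (map (@liftL n) w))) H.
- move=> A0 rhs w0 rin _ IH; econstructor; last exact: IH.
  by apply/mapP; exists (A0, rhs).
- by constructor.
- by move=> a rest w0 _ IH /=; constructor.
- by move=> A0 rest u w0 _ IH1 _ IH2; rewrite map_cat /=; constructor.
Qed.

Lemma der_map2 P A w' : cfg_der (map liftP P) A w' ->
  exists w, w' = map (@liftL n) w /\ cfg_der P A w.
Proof.
move=> H.
apply: (@der_mut L' (map liftP P) (fun A w' _ => exists w, w' = map (@liftL n) w /\ cfg_der P A w)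
   (fun rhs' w' _ => forall rhs, rhs' = map liftS rhs ->
      exists w, w' = map (@liftL n) w /\ cfg_ders P rhs w)) H.
- move=> A0 rhs' w0 /mapP [[A1 rhs] rin [-> ->]] _ IH.
  have [w [-> Hw]] := IH rhs erefl; exists w; split => //.
  by econstructor; eauto.
- by case=> // _; exists [::]; split => //; constructor.
- move=> a rest w0 _ IH [//|[B|b] r] //= [Eb Er].
  have [w [-> Hw]] := IH r Er; exists (b :: w); rewrite Eb; split => //.
  by constructor.
- move=> A0 rest u w0 _ IH1 _ IH2 [//|[B|b] r] //= [Eb Er].
  have [u1 [-> Hu]] := IH1; have [w1 [-> Hw]] := IH2 r Er.
  exists (u1 ++ w1); rewrite map_cat; split => //.
  by rewrite -Eb; constructor.
Qed.

Lemma lang_mapG g w' : cfg_lang (mapG g) w' <->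
  exists w, w' = map (@liftL n) w /\ cfg_lang g w.
Proof.
split; first exact: der_map2.
by case=> w [-> Hw]; apply: der_map1.
Qed.

Lemma fresh_cfg (g : cfg L) : g.1 < pickle g /\
  forall p, p \in g.2 -> p.1 < pickle g /\ forall B, inl B \in p.2 -> B < pickle g.
Proof.
case: g => S P /=.
have E : pickle (S, P) = CodeSeq.code [:: S; pickle P] by [].
have HP : pickle P < pickle (S, P) by rewrite E; apply: ltc; rewrite !inE eqxx orbT.
split; first by rewrite E; apply: ltc; rewrite inE eqxx.
move=> [A rhs] pin /=.
have Hp : pickle (A, rhs) < pickle P.
  have -> : pickle P = CodeSeq.code (map pickle P) by [].
  by apply: ltc; apply/mapP; exists (A, rhs).
have Ep : pickle (A, rhs) = CodeSeq.code [:: A; pickle rhs] by [].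
split.
  by apply: ltn_trans (ltn_trans Hp HP); rewrite Ep; apply: ltc; rewrite inE eqxx.
move=> B Bin; apply: ltn_trans (ltn_trans Hp HP).
have Hr : pickle rhs < pickle (A, rhs) by rewrite Ep; apply: ltc; rewrite !inE eqxx orbT.
apply: ltn_trans Hr.
have Hb : pickle (inl B : nat + L) < pickle rhs.
  have -> : pickle rhs = CodeSeq.code (map pickle rhs) by [].
  by apply: ltc; apply/mapP; exists (inl B).
apply: ltn_trans Hb.
have -> : pickle (inl B : nat + L) = CodeSeq.code [:: CodeSeq.code [:: B]; 0] by [].
apply: ltn_trans (ltc (mem_head _ _)).
by apply: ltc; rewrite inE.
Qed.

Lemma ders_inv (P : seq (nat * seq (nat + L'))) x rest w : cfg_ders P (x :: rest) w ->
  (exists a w1, [/\ x = inr a, w = a :: w1 & cfg_ders P rest w1]) \/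
  (exists A u w1, [/\ x = inl A, w = u ++ w1, cfg_der P A u & cfg_ders P rest w1]).
Proof.
move=> H; inversion H; subst; [left; exists a, w0 | right; exists A, u, w0]; by split.
Qed.

Lemma ders_nil_inv (P : seq (nat * seq (nat + L'))) w : cfg_ders P [::] w -> w = [::].
Proof. by move=> H; inversion H. Qed.

Lemma lang_tG g w' : cfg_lang (tG g) w' <->
  exists w, w' = tL n :: map (@liftL n) w /\ cfg_lang g w.
Proof.
have [HS Hp] := fresh_cfg g.
set q := pickle g.
set P'' := (q, [:: inr (tL n); inl g.1]) :: map liftP g.2.
have claim1 A w : cfg_der P'' A w -> A != q -> cfg_der (map liftP g.2) A w.
  move=> H.
  apply: (@der_mut L' P'' (fun A w _ => A != q -> cfg_der (map liftP g.2) A w)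
   (fun rhs w _ => (forall B, inl B \in rhs -> B != q) -> cfg_ders (map liftP g.2) rhs w)) H.
  - move=> A0 rhs w0; rewrite inE => /orP [/eqP [-> _]|rin] _ IH Aq; first by rewrite eqxx in Aq.
    econstructor; first exact: rin; apply: IH => B Bin.
    case/mapP: rin => [[A1 r1] r1in [_ E]]; rewrite E in Bin.
    case/mapP: Bin => [[B1|b1] B1in //= [EB]]; rewrite -EB in B1in.
    by have [_ /(_ B B1in)] := Hp _ r1in; rewrite neq_ltn => ->.
  - by constructor.
  - by move=> a rest w0 _ IH HB; constructor; apply: IH => B Bin; apply: HB; rewrite inE Bin orbT.
  - move=> A0 rest u w0 _ IH1 _ IH2 HB; constructor.
      by apply: IH1; apply: HB; rewrite mem_head.
    by apply: IH2 => B Bin; apply: HB; rewrite inE Bin orbT.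
have claim2 A w : cfg_der (map liftP g.2) A w -> cfg_der P'' A w.
  move=> H.
  apply: (@der_mut L' (map liftP g.2) (fun A w _ => cfg_der P'' A w)
   (fun rhs w _ => cfg_ders P'' rhs w)) H.
  - by move=> A0 rhs w0 rin _ IH; econstructor; [apply: mem_behead; exact: rin | exact: IH].
  - by constructor.
  - by move=> a rest w0 _ IH; constructor.
  - by move=> A0 rest u w0 _ IH1 _ IH2; constructor.
have Sq : g.1 != q by rewrite neq_ltn HS.
rewrite /cfg_lang /=; split.
  move=> H; inversion H as [A rhs w0 rin Hd E1 E2]; subst.
  move: rin; rewrite inE => /orP [/eqP [E]|rin]; last first.
    case/mapP: rin => [[A1 r1] r1in [E1 _]].
    by have [+ _] := Hp _ r1in; rewrite -E1 ltnn.
  rewrite E in Hd.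
  case/ders_inv: Hd => [[a [w1 [[<-] -> Hd]]]|[? [? [? [//]]]]].
  case/ders_inv: Hd => [[? [? [//]]]|[A [u [w2 [[<-] -> Hu /ders_nil_inv ->]]]]].
  have [w [-> Hw]] := der_map2 (claim1 _ _ Hu Sq).
  by exists w; rewrite cats0.
case=> w [-> Hw]; econstructor; first exact: mem_head.
constructor; rewrite -[map _ w]cats0; constructor; last by constructor.
by apply: claim2; apply: der_map1.
Qed.
End CFG.

Arguments CodeSeq.code : simpl never.

Definition epair a b := ECons a (ECons b (EConst 0)).
Definition esingle a := ECons a (EConst 0).

Section Rules.
Variable v : seq nat.

Lemma R_nth0 (A B : countType) e (y1 : A) (y2 : B) :
  eval e v = pickle (y1, y2) -> eval (ENth e 0) v = pickle y1.
Proof. by move=> /= ->; rewrite [pickle (_, _)]/= CodeSeq.codeK. Qed.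
Lemma R_nth1 (A B : countType) e (y1 : A) (y2 : B) :
  eval e v = pickle (y1, y2) -> eval (ENth e 1) v = pickle y2.
Proof. by move=> /= ->; rewrite [pickle (_, _)]/= CodeSeq.codeK. Qed.
Lemma R_nthS (A : countType) e (y : A) :
  eval e v = pickle (Some y) -> eval (ENth e 0) v = pickle y.
Proof. by move=> /= ->; rewrite [pickle (Some _)]/= CodeSeq.codeK. Qed.
Lemma R_pair (A B : countType) a b (y1 : A) (y2 : B) :
  eval a v = pickle y1 -> eval b v = pickle y2 -> eval (epair a b) v = pickle (y1, y2).
Proof. by move=> /= -> ->; rewrite CodeSeq.codeK. Qed.
Lemma R_cons (A : countType) a b (y : A) s :
  eval a v = pickle y -> eval b v = pickle s -> eval (ECons a b) v = pickle (y :: s).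
Proof. by move=> /= -> ->; rewrite [pickle s]/= CodeSeq.codeK. Qed.
Lemma R_nil (A : countType) : eval (EConst 0) v = pickle ([::] : seq A).
Proof. by []. Qed.
Lemma R_some (A : countType) a (y : A) :
  eval a v = pickle y -> eval (esingle a) v = pickle (Some y).
Proof. by move=> /= ->. Qed.
Lemma R_none (A : countType) : eval (EConst 0) v = pickle (None : option A).
Proof. by []. Qed.
Lemma R_const c : eval (EConst c) v = pickle c.
Proof. by []. Qed.
Lemma R_map (A B : countType) b l (s : seq A) (f : A -> B) :
  eval l v = pickle s -> (forall y, eval b (pickle y :: v) = pickle (f y)) ->
  eval (EMap b l) v = pickle (map f s).
Proof.
move=> /= -> Hb; rewrite [pickle s]/= CodeSeq.codeK -map_comp.
have -> : pickle (map f s) = CodeSeq.code (map pickle (map f s)) by [].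
by rewrite -map_comp; congr CodeSeq.code; apply: eq_map => y /=.
Qed.
End Rules.

Lemma R_arg (A : countType) (y : A) v : eval (EArg 0) (pickle y :: v) = pickle y.
Proof. by []. Qed.

Lemma R_inl (T : countType) a v (A : nat) :
  eval a v = pickle A -> eval (epair (esingle a) (EConst 0)) v = pickle (inl A : nat + T).
Proof.
move=> H; have -> : pickle (inl A : nat + T) = pickle (Some A, (None : option T)) by [].
by apply: R_pair; [apply: R_some | apply: R_none].
Qed.
Lemma R_inr (T : countType) a v (y : T) :
  eval a v = pickle y -> eval (epair (EConst 0) (esingle a)) v = pickle (inr y : nat + T).
Proof.
move=> H; have -> : pickle (inr y : nat + T) = pickle ((None : option nat), Some y) by [].
by apply: R_pair; [apply: R_none | apply: R_some].
Qed.

Section Trans.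
Variable n : nat.
Local Notation L := ('I_n * bool)%type.
Local Notation L' := (option 'I_n * bool)%type.

Definition eell e := epair (esingle (ENth e 0)) (ENth e 1).
Lemma R_ell e v (a : L) : eval e v = pickle a -> eval (eell e) v = pickle (liftL a).
Proof.
case: a => i b H; apply: R_pair; first apply: R_some; [exact: R_nth0 H | exact: R_nth1 H].
Qed.

Definition etau e := epair (epair (ENth (ENth e 0) 0) (eell (ENth (ENth e 0) 1))) (ENth e 1).
Lemma R_tau e v (t : nat * L * nat) : eval e v = pickle t -> eval (etau e) v = pickle (liftT t).
Proof.
case: t => [[p a] q] H; have H0 := R_nth0 H.
apply: R_pair; last exact: R_nth1 H.
by apply: R_pair; [exact: R_nth0 H0 | apply: R_ell; exact: R_nth1 H0].
Qed.

Definition enuB d := epair (epair (ENth (ENth d 0) 0) (EMap (etau (EArg 0)) (ENth (ENth d 0) 1))) (ENth d 1).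
Lemma R_nuB d v (M : nfa L) : eval d v = pickle M -> eval (enuB d) v = pickle (mapN M).
Proof.
case: M => [[s tr] fin] H; have H0 := R_nth0 H.
apply: R_pair; last exact: R_nth1 H.
apply: R_pair; first exact: R_nth0 H0.
by apply: R_map; [exact: R_nth1 H0 | move=> y; apply: R_tau; exact: R_arg].
Qed.

Definition eB x := epair (enuB (ENth x 0)) (EMap (eell (EArg 0)) (ENth x 1)).
Lemma R_eB x v (M : nfa L) (w : seq L) : eval x v = pickle (M, w) ->
  eval (eB x) v = pickle (mapN M, map (@liftL n) w).
Proof.
move=> H; apply: R_pair; first by apply: R_nuB; exact: R_nth0 H.
by apply: R_map; [exact: R_nth1 H | move=> y; apply: R_ell; exact: R_arg].
Qed.

Definition enuT d := epair (epair d (ECons (epair (epair d (EConst 3)) (ENth (ENth d 0) 0))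
   (EMap (etau (EArg 0)) (ENth (ENth d 0) 1)))) (ENth d 1).
Lemma R_nuT d v (M : nfa L) : eval d v = pickle M -> eval (enuT d) v = pickle (tN M).
Proof.
case: M => [[s tr] fin] H; have H0 := R_nth0 H.
apply: R_pair; last exact: R_nth1 H.
apply: R_pair; first exact: H.
apply: R_cons.
  apply: R_pair; last exact: R_nth0 H0.
  by apply: R_pair; [exact: H | exact: (R_const _ 3)].
by apply: R_map; [exact: R_nth1 H0 | move=> y; apply: R_tau; exact: R_arg].
Qed.

Definition eT x := epair (enuT (ENth x 0)) (ECons (EConst 3) (EMap (eell (EArg 0)) (ENth x 1))).
Lemma R_eT x v (M : nfa L) (w : seq L) : eval x v = pickle (M, w) ->
  eval (eT x) v = pickle (tN M, tL n :: map (@liftL n) w).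
Proof.
move=> H; apply: R_pair; first by apply: R_nuT; exact: R_nth0 H.
apply: R_cons; first exact: (R_const _ 3).
by apply: R_map; [exact: R_nth1 H | move=> y; apply: R_ell; exact: R_arg].
Qed.

Definition esig e := EIf0 (ENth e 0) (epair (EConst 0) (esingle (eell (ENth (ENth e 1) 0)))) e.
Lemma R_sig e v (x : nat + L) : eval e v = pickle x -> eval (esig e) v = pickle (liftS x).
Proof.
case: x => [A|a] H.
  have H0 : eval (ENth e 0) v = pickle (Some A).
    by apply: (R_nth0 (y2 := None : option L)); rewrite H.
  have eIf : eval (esig e) v = if eval (ENth e 0) v is 0 then
     eval (epair (EConst 0) (esingle (eell (ENth (ENth e 1) 0)))) v else eval e v by [].
  rewrite eIf H0.
  have -> : pickle (Some A) = (2 ^ A * 1).-1.+1 by rewrite prednK // muln1 expn_gt0.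
  by rewrite H.
have H0 : eval (ENth e 0) v = pickle (None : option nat).
  by apply: (R_nth0 (y2 := Some a)); rewrite H.
have H1 : eval (ENth e 1) v = pickle (Some a).
  by apply: (R_nth1 (y1 := None : option nat)); rewrite H.
have eIf : eval (esig e) v = if eval (ENth e 0) v is 0 then
   eval (epair (EConst 0) (esingle (eell (ENth (ENth e 1) 0)))) v else eval e v by [].
rewrite eIf H0.
by apply: R_inr; apply: R_ell; apply: R_nthS.
Qed.

Definition epi e := epair (ENth e 0) (EMap (esig (EArg 0)) (ENth e 1)).
Lemma R_pi e v (p : nat * seq (nat + L)) : eval e v = pickle p -> eval (epi e) v = pickle (liftP p).
Proof.
case: p => A rhs H; apply: R_pair; first exact: R_nth0 H.
by apply: R_map; [exact: R_nth1 H | move=> y; apply: R_sig; exact: R_arg].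
Qed.

Definition egB g := epair (ENth g 0) (EMap (epi (EArg 0)) (ENth g 1)).
Definition eBA x := epair (egB (ENth x 0)) (EMap (eell (EArg 0)) (ENth x 1)).
Lemma R_eBA x v (g : cfg L) (w : seq L) : eval x v = pickle (g, w) ->
  eval (eBA x) v = pickle (mapG g, map (@liftL n) w).
Proof.
case: g => S P H; have H0 := R_nth0 H.
apply: R_pair.
  apply: R_pair; first exact: R_nth0 H0.
  by apply: R_map; [exact: R_nth1 H0 | move=> y; apply: R_pi; exact: R_arg].
by apply: R_map; [exact: R_nth1 H | move=> y; apply: R_ell; exact: R_arg].
Qed.

Definition egT g := epair g (ECons (epair g (epair (epair (EConst 0) (esingle (EConst 3)))
   (epair (esingle (ENth g 0)) (EConst 0)))) (EMap (epi (EArg 0)) (ENth g 1))).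
Definition eTA x := epair (egT (ENth x 0)) (ECons (EConst 3) (EMap (eell (EArg 0)) (ENth x 1))).
Lemma R_eTA x v (g : cfg L) (w : seq L) : eval x v = pickle (g, w) ->
  eval (eTA x) v = pickle (tG g, tL n :: map (@liftL n) w).
Proof.
case: g => S P H; have H0 := R_nth0 H.
apply: R_pair.
  apply: R_pair; first exact: H0.
  apply: R_cons.
    apply: R_pair; first exact: H0.
    apply: R_cons; first by apply: R_inr; exact: (R_const _ 3).
    apply: R_cons; last exact: R_nil.
    by apply: R_inl; exact: R_nth0 H0.
  by apply: R_map; [exact: R_nth1 H0 | move=> y; apply: R_pi; exact: R_arg].
apply: R_cons; first exact: (R_const _ 3).
by apply: R_map; [exact: R_nth1 H | move=> y; apply: R_ell; exact: R_arg].
Qed.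
End Trans.

Lemma dec_transfer (X Y : countType) (DomX PX : X -> Prop) (DomY PY : Y -> Prop)
  (T : X -> Y) (e : ex) :
  (forall x, eval e [:: pickle x] = pickle (T x)) ->
  (forall x, DomX x -> DomY (T x)) ->
  (forall x, DomX x -> (PX x <-> PY (T x))) ->
  decidable_on DomY PY -> decidable_on DomX PX.
Proof.
move=> He HD HP [f Hf]; exists (RComp f [:: compile 1 e]) => x Dx.
have Hc : reval (compile 1 e) [:: pickle x] (pickle (T x)).
  by rewrite -He; apply: (compE (C_compile e 1)).
have [Hy Hn] := Hf (T x) (HD x Dx).
split=> Hp; econstructor; try (by constructor; [exact: Hc | constructor]).
  by apply: Hy; apply/(HP x Dx).
by apply: Hn => /(HP x Dx).
Qed.

Lemma cor_gen (G : Type) (mul : G -> G -> G) (one : G) (inv : G -> G)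
  (HG : is_group mul one inv) (n : nat) (gens : 'I_n -> G) (phi phiinv : G -> G)
  (Hphi : is_aut mul phi phiinv) (DG DS : countType)
  (langG : DG -> seq ('I_n * bool) -> Prop)
  (langS : DS -> seq (option 'I_n * bool) -> Prop)
  (TB TT : DG -> DS) (eBf eTf : ex -> ex)
  (HeB : forall x v d w, eval x v = pickle (d, w) -> eval (eBf x) v = pickle (TB d, map (@liftL n) w))
  (HeT : forall x v d w, eval x v = pickle (d, w) -> eval (eTf x) v = pickle (TT d, tL n :: map (@liftL n) w))
  (HLB : forall d w', langS (TB d) w' <-> exists w0, w' = map (@liftL n) w0 /\ langG d w0)
  (HLT : forall d w', langS (TT d) w' <-> exists w0, w' = tL n :: map (@liftL n) w0 /\ langG d w0) :
  cor_3_10_for mul one inv gens phi phiinv langG langS.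
Proof.
split.
  move=> Hdec; split.
    apply: (dec_transfer (T := fun x => (TB x.1, map (@liftL n) x.2)) (e := eBf (EArg 0))) Hdec.
    - by move=> [d w]; apply: HeB.
    - by [].
    - by move=> [d w] _ /=; symmetry; exact: (sd_brcp one inv gens Hphi w (HLB d)).
  apply: (dec_transfer (T := fun x => (TT x.1, tL n :: map (@liftL n) x.2)) (e := eTf (EArg 0))) Hdec.
  - by move=> [d w]; apply: HeT.
  - by [].
  - by move=> [d w] _ /=; symmetry; exact: (sd_tcp HG gens Hphi w (HLT d)).
move=> Hdec; split.
  apply: (dec_transfer (T := fun x => (x.1, (TB x.2.1, map (@liftL n) x.2.2)))
     (e := epair (ENth (EArg 0) 0) (eBf (ENth (EArg 0) 1)))) Hdec.
  - move=> [ps [d w]]; apply: R_pair; first exact: (R_nth0 (y2 := (d, w))).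
    by apply: HeB; exact: (R_nth1 (y1 := ps)).
  - by [].
  - move=> [ps [d w]] _ /=; split.
      case=> psi [psiinv [Hr Hb]]; exists psi, psiinv; split => //.
      by apply/(sd_brcp one inv gens Hr.1 w (HLB d)).
    case=> psi [psiinv [Hr Hb]]; exists psi, psiinv; split => //.
    by apply/(sd_brcp one inv gens Hr.1 w (HLB d)).
apply: (dec_transfer (T := fun x => (x.1, (TT x.2.1, tL n :: map (@liftL n) x.2.2)))
   (e := epair (ENth (EArg 0) 0) (eTf (ENth (EArg 0) 1)))) Hdec.
- move=> [ps [d w]]; apply: R_pair; first exact: (R_nth0 (y2 := (d, w))).
  by apply: HeT; exact: (R_nth1 (y1 := ps)).
- by [].
- move=> [ps [d w]] _ /=; split.
    case=> psi [psiinv [Hr Hb]]; exists psi, psiinv; split => //.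
    by apply/(sd_tcp HG gens Hr.1 w (HLT d)).
  case=> psi [psiinv [Hr Hb]]; exists psi, psiinv; split => //.
  by apply/(sd_tcp HG gens Hr.1 w (HLT d)).
Qed.

Theorem corollary3p10
  (G : Type) (mul : G -> G -> G) (one : G) (inv : G -> G)
  (HG : is_group mul one inv)
  (n : nat) (gens : 'I_n -> G)
  (Hgen : forall g : G, exists w, wordG mul one inv gens w = g)
  (phi phiinv : G -> G) (Hphi : is_aut mul phi phiinv) :
  (* (i) and (ii): rational subsets *)
  cor_3_10_for mul one inv gens phi phiinv
    (@nfa_lang ('I_n * bool)%type) (@nfa_lang (option 'I_n * bool)%type)
  /\
  (* (iii) and (iv): algebraic subsets *)
  cor_3_10_for mul one inv gens phi phiinv
    (@cfg_lang ('I_n * bool)%type) (@cfg_lang (option 'I_n * bool)%type).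
Proof.
split.
  apply: (cor_gen HG gens Hphi (TB := @mapN n) (TT := @tN n) (eBf := @eB) (eTf := @eT)).
  - exact: R_eB.
  - exact: R_eT.
  - exact: lang_mapN.
  - exact: lang_tN.
apply: (cor_gen HG gens Hphi (TB := @mapG n) (TT := @tG n) (eBf := @eBA) (eTf := @eTA)).
- exact: R_eBA.
- exact: R_eTA.
- exact: lang_mapG.
- exact: lang_tG.
Qed.
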